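(* Let $\mathcal{P}_{n,k}$ be the set of all CPWL functions $p\colon\mathbb{R}^n\to\mathbb{R}$ with exactly $k$ distinct linear components, and for $p\in\mathcal{P}_{n,k}$ let $\mathcal{C}_{n,k}(p)$ be the collection of all families of closed convex subsets of $\mathbb{R}^n$ whose union is $\mathbb{R}^n$ and on each of which $p$ is affine. Then $k\leq\min_{\mathcal{Q}\in\mathcal{C}_{n,k}(p)}|\mathcal{Q}|\leq\phi(n,k)$, where $\phi(n,k)=\min\left(\sum_{i=0}^n \binom{(k^2-k)/2}{i},\,k!\right)$.
   Context: A function $p\colon\mathbb{R}^n\to\mathbb{R}$ is CPWL (continuous piecewise linear) if there exist finitely many closed subsets $\mathcal{U}_1,\dots,\mathcal{U}_m$ of $\mathbb{R}^n$ whose union is $\mathbb{R}^n$ and such that $p$ is affine on each $\mathcal{U}_i$. An affine function $f$ is a linear component of $p$ if there is a nonempty subfamily of a minimum-size family of such closed subsets on whose union $f=p$. *)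

(* Defs.v *)
From HB Require Import structures.
From mathcomp Require Import all_boot all_order all_algebra.
From mathcomp Require Import all_classical all_reals all_analysis.
Set Implicit Arguments. Unset Strict Implicit. Unset Printing Implicit Defensive.
Import Order.TTheory GRing.Theory Num.Theory numFieldNormedType.Exports.
Local Open Scope classical_set_scope.
Local Open Scope ring_scope.

Definition affine_fun (R : realType) (n : nat) (f : 'rV[R]_n -> R) : Prop :=
  exists (a : 'rV[R]_n) (b : R), forall x, f x = \sum_(i < n) a 0 i * x 0 i + b.

Definition affine_on (R : realType) (n : nat) (p : 'rV[R]_n -> R)
  (A : set 'rV[R]_n) : Prop :=
  exists f, affine_fun f /\ (forall x, A x -> p x = f x).

Definition closed_cover (R : realType) (n : nat) (p : 'rV[R]_n -> R)
  (m : nat) (U : 'I_m -> set 'rV[R]_n) : Prop :=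
  (forall i, closed (U i)) /\ \bigcup_(i in [set: 'I_m]) U i = [set: 'rV[R]_n] /\
  (forall i, affine_on p (U i)).

Definition convex_set_R (R : realType) (n : nat) (A : set 'rV[R]_n) : Prop :=
  forall x y (t : R), A x -> A y -> 0 <= t -> t <= 1 ->
    A (t *: x + (1 - t) *: y).

Definition convex_cover (R : realType) (n : nat) (p : 'rV[R]_n -> R)
  (m : nat) (U : 'I_m -> set 'rV[R]_n) : Prop :=
  closed_cover p U /\ (forall i, convex_set_R (U i)).

Definition is_CPWL (R : realType) (n : nat) (p : 'rV[R]_n -> R) : Prop :=
  exists m (U : 'I_m -> set 'rV[R]_n), closed_cover p U.

Definition min_cover_size (R : realType) (n : nat) (p : 'rV[R]_n -> R)
  (m : nat) : Prop :=
  (exists U : 'I_m -> set 'rV[R]_n, closed_cover p U) /\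
  (forall m' (U : 'I_m' -> set 'rV[R]_n), closed_cover p U -> (m <= m')%N).

Definition linear_component (R : realType) (n : nat) (p : 'rV[R]_n -> R)
  (f : 'rV[R]_n -> R) : Prop :=
  affine_fun f /\
  exists m (U : 'I_m -> set 'rV[R]_n) (S : {set 'I_m}),
    min_cover_size p m /\ closed_cover p U /\ S != finset.set0 /\
    (forall x, (\bigcup_(i in [set i | i \in S]) U i) x -> f x = p x).

Definition num_linear_components (R : realType) (n : nat) (p : 'rV[R]_n -> R)
  (k : nat) : Prop :=
  exists g : 'I_k -> ('rV[R]_n -> R), injective g /\
    (forall f, linear_component p f <-> exists i, f = g i).

Definition in_P (R : realType) (n k : nat) (p : 'rV[R]_n -> R) : Prop :=
  is_CPWL p /\ num_linear_components p k.

Definition phi (n k : nat) : nat :=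
  minn (\sum_(i < n.+1) 'C((k ^ 2 - k) %/ 2, i)) k`!.

(* Main.v *)
Require Import Defs.
From mathcomp Require Import all_boot.
Set Implicit Arguments. Unset Strict Implicit. Unset Printing Implicit Defensive.

Section Pajor.
Variable T : finType.

Definition shatters (F : {set {set T}}) (A : {set T}) :=
  [forall B : {set T}, (B \subset A) ==> [exists S in F, S :&: A == B]].

Lemma shattersP (F : {set {set T}}) (A : {set T}) :
  reflect (forall B : {set T}, B \subset A -> exists2 S, S \in F & S :&: A = B) (shatters F A).
Proof.
apply: (iffP forallP) => [H B BA|H B]; last first.
  apply/implyP => /H [S SF SA]; apply/existsP; exists S; by rewrite SF SA eqxx.
by move: (H B); rewrite BA /= => /existsP [S /andP [SF /eqP SA]]; exists S.
Qed.

Lemma shatters_notin (F : {set {set T}}) (A : {set T}) x : (forall S, S \in F -> x \notin S) -> shatters F A -> x \notin A.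
Proof.
move=> Hx /shattersP /(_ A (subxx A)) [S SF SA]; apply/negP => xA.
by move: (Hx S SF); rewrite -SA in xA; move: xA; rewrite inE => /andP [->].
Qed.

Lemma pajor_gen N : forall (U : {set T}) (F : {set {set T}}), #|U| <= N ->
  (forall S, S \in F -> S \subset U) -> #|F| <= #|[set A | shatters F A]|.
Proof.
elim: N => [|N IH] U F.
  rewrite leqn0 cards_eq0 => /eqP -> HF.
  case: (set_0Vmem F) => [->|[S SF]]; first by rewrite cards0.
  have FS : F \subset [set set0].
    by apply/subsetP => S' /HF; rewrite subset0 => /eqP ->; rewrite inE.
  apply: (leq_trans (subset_leq_card FS)); rewrite cards1 card_gt0.
  apply/set0Pn; exists set0; rewrite inE; apply/shattersP => B.
  rewrite subset0 => /eqP ->; exists S => //; by rewrite setI0.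
move=> UN HF.
case: (set_0Vmem U) => [U0|[x xU]].
  by apply: (IH U) => //; rewrite U0 cards0.
pose F1 := [set S :\ x | S in F].
pose F2 := [set S in F | (x \notin S) && ((x |: S) \in F)].
have HF1 : forall S, S \in F1 -> S \subset U :\ x.
  move=> S /imsetP [S' S'F ->]; by apply: setSD; apply: HF.
have HF2 : forall S, S \in F2 -> S \subset U :\ x.
  move=> S; rewrite inE => /andP [SF /andP [xS _]].
  apply/subsetP => y yS; rewrite !inE (subsetP (HF S SF) y yS) andbT.
  by apply: contraNneq xS => <-.
have cU : #|U :\ x| <= N by move: UN; rewrite (cardsD1 x U) xU add1n ltnS.
have IH1 := IH _ F1 cU HF1.
have IH2 := IH _ F2 cU HF2.
pose Fb := [set S in F | (x \in S) && ((S :\ x) \in F)].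
pose Fa := F :\: Fb.
have cF : #|F| = #|Fa| + #|Fb|.
  rewrite /Fa -(cardsID Fb F) addnC (_ : F :&: Fb = Fb) //.
  apply/setIidPr; by apply/subsetP => S; rewrite inE => /andP [].
have cFb : #|Fb| = #|F2|.
  have -> : F2 = [set S :\ x | S in Fb].
    apply/setP => S; apply/idP/imsetP.
      rewrite inE => /andP [SF /andP [xS xSF]]; exists (x |: S).
        by rewrite inE xSF setU11 /= setU1K.
      by rewrite setU1K.
    move=> [S' ]; rewrite inE => /andP [S'F /andP [xS' S'xF]] ->.
    by rewrite inE S'xF setD11 /= setD1K.
  rewrite card_in_imset // => S1 S2; rewrite !inE => /andP [_ /andP [x1 _]] /andP [_ /andP [x2 _]] E.
  by rewrite -(setD1K x1) E setD1K.
have cFa : #|Fa| = #|F1|.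
  have -> : F1 = [set S :\ x | S in Fa].
    apply/setP => S; apply/imsetP/imsetP => [[S' S'F ->]|[S' ]].
      case: (boolP (S' \in Fb)) => [H|H].
        move: H; rewrite inE => /andP [_ /andP [_ H2]].
        exists (S' :\ x); last by rewrite setDDl setUid.
        by rewrite /Fa /Fb !inE eqxx /= ?andbF ?H2.
      by exists S' => //; rewrite /Fa inE H S'F.
    by rewrite /Fa inE => /andP [_ S'F] ->; exists S'.
  rewrite card_in_imset // => S1 S2; rewrite !inE => /andP [n1 F1'] /andP [n2 F2'] E.
  case: (boolP (x \in S1)) => x1; case: (boolP (x \in S2)) => x2.
  - by rewrite -(setD1K x1) E setD1K.
  - exfalso; move: n1; rewrite F1' x1 /=; have -> : S1 :\ x = S2.
      by rewrite E; apply/setP => y; rewrite !inE; case: eqP => // ->; rewrite (negPf x2).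
    by rewrite F2'.
  - exfalso; move: n2; rewrite F2' x2 /=; have -> : S2 :\ x = S1.
      by rewrite -E; apply/setP => y; rewrite !inE; case: eqP => // ->; rewrite (negPf x1).
    by rewrite F1'.
  - apply/setP => y; case: (y =P x) => [->|/eqP yx]; first by rewrite (negPf x1) (negPf x2).
    by move/setP: E => /(_ y); rewrite !inE yx.
have x1 : forall S, S \in F1 -> x \notin S.
  by move=> S /imsetP [S' _ ->]; rewrite setD11.
have x2 : forall S, S \in F2 -> x \notin S.
  by move=> S; rewrite inE => /andP [_ /andP []].
pose Sh1 := [set A | shatters F1 A].
pose Sh2 := [set x |: A | A in [set A | shatters F2 A]].
have sub1 : Sh1 \subset [set A | shatters F A].
  apply/subsetP => A; rewrite !inE => /[dup] /(shatters_notin x1) xA /shattersP H.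
  apply/shattersP => B /H [S /imsetP [S' S'F ->] SA]; exists S' => //.
  rewrite -SA; apply/setP => y; rewrite !inE; case: (y =P x) => // ->.
  by rewrite (negPf xA) andbF.
have sub2 : Sh2 \subset [set A | shatters F A].
  apply/subsetP => A' /imsetP [A]; rewrite inE => /[dup] /(shatters_notin x2) xA /shattersP H ->.
  rewrite inE; apply/shattersP => B BA.
  case: (boolP (x \in B)) => xB.
    have [|S SF2 SA] := H (B :\ x).
      apply/subsetP => y; rewrite !inE => /andP [yx yB].
      by move: (subsetP BA y yB); rewrite !inE (negPf yx).
    move: SF2; rewrite inE => /andP [_ /andP [xS xSF]].
    exists (x |: S) => //; rewrite -setUIr SA setD1K //.
  have [|S SF2 SA] := H B.
    apply/subsetP => y yB; move: (subsetP BA y yB); rewrite !inE.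
    by case: eqP => // yx; move: yB; rewrite yx (negPf xB).
  move: SF2; rewrite inE => /andP [SF /andP [xS _]]; exists S => //.
  rewrite setIUr -SA; apply/setP => y; rewrite !inE.
  by case: (y =P x) => [->|_]; rewrite ?(negPf xS) ?andbF.
have disj : [disjoint Sh1 & Sh2].
  apply/pred0P => A /=; apply/negbTE/negP => /andP [].
  rewrite inE => /(shatters_notin x1) xA /imsetP [A' _ E].
  by move: xA; rewrite E setU11.
have cSh2 : #|Sh2| = #|[set A | shatters F2 A]|.
  rewrite card_in_imset // => A1 A2; rewrite !inE => /(shatters_notin x2) n1 /(shatters_notin x2) n2 E.
  by rewrite -(setU1K n1) E setU1K.
rewrite cF cFa cFb.
apply: (leq_trans (leq_add IH1 IH2)); rewrite -cSh2.
have -> : #|Sh1| + #|Sh2| = #|Sh1 :|: Sh2|.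
  by rewrite cardsU (disjoint_setI0 disj) cards0 subn0.
apply: subset_leq_card; by rewrite subUset sub1 sub2.
Qed.

Lemma pajor (U : {set T}) (F : {set {set T}}) :
  (forall S, S \in F -> S \subset U) -> #|F| <= #|[set A | shatters F A]|.
Proof. by apply: (@pajor_gen #|U| U). Qed.

Lemma card_small (U : {set T}) d :
  #|[set A : {set T} | (A \subset U) && (#|A| <= d)]| = \sum_(i < d.+1) 'C(#|U|, i).
Proof.
elim: d => [|d IH].
  rewrite big_ord_recr big_ord0 /= -cards_draws; apply: eq_card => A.
  by rewrite !inE leqn0.
rewrite big_ord_recr /= -IH -cards_draws.
have -> : forall X Y : {set {set T}}, X :&: Y = set0 -> #|X| + #|Y| = #|X :|: Y|.
  by move=> X Y XY; rewrite cardsU XY cards0 subn0.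
  apply: eq_card => A; rewrite !inE leq_eqVlt ltnS.
  by case: (A \subset U) => //=; rewrite orbC.
apply/setP => A; rewrite !inE.
by case: (A \subset U); case: (#|A| =P d.+1) => [->|]; rewrite ?ltnn ?andbF.
Qed.

Lemma sauer (U : {set T}) (F : {set {set T}}) d :
  (forall S, S \in F -> S \subset U) ->
  (forall A, shatters F A -> #|A| <= d) ->
  #|F| <= \sum_(i < d.+1) 'C(#|U|, i).
Proof.
move=> HF Hd; rewrite -card_small; apply: (leq_trans (pajor HF)).
apply: subset_leq_card; apply/subsetP => A; rewrite !inE => sh.
rewrite Hd // andbT.
move/shattersP: sh => /(_ A (subxx A)) [S SF SA].
by apply: subset_trans (HF S SF); rewrite -SA subsetIl.
Qed.

End Pajor.

From mathcomp Require Import all_boot all_order all_algebra.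
From mathcomp Require Import all_classical all_reals all_analysis.
From HB Require Import structures.
From mathcomp Require Import ring lra.
From mathcomp Require Import fingroup perm zify.
Import Order.TTheory GRing.Theory Num.Theory numFieldNormedType.Exports.


Local Open Scope classical_set_scope.
Local Open Scope ring_scope.

Section Geo.
Variables (R : realType) (n : nat).
Local Notation V := 'rV[R]_n.

Definition dot (a x : V) : R := \sum_(i < n) a 0 i * x 0 i.

Lemma dotD a x y : dot a (x + y) = dot a x + dot a y.
Proof. by rewrite /dot -big_split; apply: eq_bigr => i _; rewrite mxE mulrDr. Qed.

Lemma dotZ a t x : dot a (t *: x) = t * dot a x.
Proof. by rewrite /dot mulr_sumr; apply: eq_bigr => i _; rewrite mxE mulrCA. Qed.

Lemma dotBl a b x : dot (a - b) x = dot a x - dot b x.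
Proof.
by rewrite /dot -sumrB; apply: eq_bigr => i _; rewrite !mxE mulrBl.
Qed.

Lemma dotNl a x : dot (- a) x = - dot a x.
Proof. by rewrite /dot -sumrN; apply: eq_bigr => i _; rewrite !mxE mulNr. Qed.

Lemma affine_conv (f : V -> R) : affine_fun f -> forall x y t,
  f (t *: x + (1 - t) *: y) = t * f x + (1 - t) * f y.
Proof.
move=> [a [b Hf]] x y t; rewrite !Hf -/(dot a _) -/(dot a x) -/(dot a y).
rewrite dotD !dotZ; ring.
Qed.

Lemma affine_line (f : V -> R) a b : (forall x, f x = dot a x + b) ->
  forall x v t, f (x + t *: v) = f x + t * dot a v.
Proof. by move=> Hf x v t; rewrite !Hf dotD dotZ; ring. Qed.

Lemma dot_continuous a : continuous (dot a).
Proof.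
rewrite /dot.
elim: (index_enum _) => [|i s IH].
  under eq_fun do rewrite big_nil. by move=> x; apply: cst_continuous.
under eq_fun do rewrite big_cons.
move=> x; apply: cvgD; [exact: nbhs_filter| |exact: IH].
apply: cvgMl_tmp; [exact: nbhs_filter|exact: coord_continuous].
Qed.

Lemma affine_continuous (f : V -> R) : affine_fun f -> continuous f.
Proof.
move=> [a [b Hf]]; have -> : f = (fun x => dot a x + b) by apply: funext => x; rewrite Hf.
move=> x; apply: cvgD; [exact: nbhs_filter|exact: dot_continuous|]. exact: (@cst_continuous _ R b x). Qed.


Definition hasint (A : set V) := exists O, [/\ open O, O !=set0 & O `<=` A].

Lemma baire_fin (m : nat) (W : 'I_m -> set V) (s : seq 'I_m) :
  (forall l, closed (W l)) -> forall O : set V, open O -> O !=set0 ->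
  O `<=` (fun x => exists2 l, l \in s & W l x) ->
  exists l, exists O', [/\ open O', O' !=set0, O' `<=` O & O' `<=` W l].
Proof.
move=> Wc; elim: s => [|l0 s IH] O Oo [x0 Ox0] Os.
  by have [l] := Os x0 Ox0.
case: (pselect (exists P, [/\ open P, P !=set0, P `<=` O & P `<=` W l0])) => [HP|nW].
  by exists l0.
case: (pselect (exists x, O x /\ ~ W l0 x)) => [[x1 [Ox1 nWx1]]|allW].
  have [||| l [P [H1 H2 H3 H4]]] := IH (O `&` ~` W l0).
  - by apply: openI => //; apply: closed_openC.
  - by exists x1.
  - move=> x [Ox nWx]; have [l] := Os x Ox; rewrite inE => /orP [/eqP ->//|ls Wlx].
    by exists l.
  by exists l, P; split => // x /H3 [].
exfalso; apply: nW; exists O; split => //; first by exists x0.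
by move=> x Ox; apply: contrapT => nWx; apply: allW; exists x.
Qed.

Lemma dot_delta (a : V) i : dot a (delta_mx 0 i) = a 0 i.
Proof.
rewrite /dot (bigD1 i) //= big1 => [|j ji]; first by rewrite !mxE !eqxx mulr1 addr0.
by rewrite !mxE eqxx (negPf ji) mulr0.
Qed.

Lemma affine_eq_open (a a' : V) (b b' : R) (O : set V) :
  open O -> O !=set0 -> (forall x, O x -> dot a x + b = dot a' x + b') ->
  a = a' /\ b = b'.
Proof.
move=> Oo [c Oc] H.
have Hd : forall x, O x -> dot (a - a') x + (b - b') = 0.
  by move=> x /H Hx; rewrite dotBl; lra.
have aa : a - a' = 0.
  apply/rowP => i; rewrite [RHS]mxE.
  pose h := fun t : R => c + t *: delta_mx 0 i.
  have hc : {for 0, continuous h}.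
    apply: cvgD; [exact: (@cst_continuous _ _ c 0)|].
    apply: cvgZr_tmp; exact: cvg_id.
  have : nbhs (h 0) O.
    by rewrite /h scale0r addr0; apply: open_nbhs_nbhs; split.
  move=> /hc /nbhs_ballP [e /= e0 He].
  have /He Ot : ball (0 : R) e (e / 2).
    by rewrite -ball_normE /= sub0r normrN ger0_norm; lra.
  have := Hd _ Ot; have := Hd _ Oc.
  rewrite /h dotD dotZ dot_delta => E1 E2.
  have : e / 2 * (a - a') 0 i = 0 by lra.
  by move/eqP; rewrite mulf_eq0 => /orP [/eqP|/eqP] //; lra.
have := Hd _ Oc; rewrite aa /dot big1 => [|i _]; last by rewrite mxE mul0r.
move=> bb; split; last lra.
by apply/eqP; rewrite -subr_eq0 aa.
Qed.

End Geo.

Section Cov.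
Variables (R : realType) (n : nat).
Local Notation V := 'rV[R]_n.
Variable p : V -> R.

Lemma min_cover_exists : is_CPWL p -> exists m, min_cover_size p m.
Proof.
move=> [m0 [U0 HU0]].
have ex : exists m, (fun m => `[< exists U : 'I_m -> set V, closed_cover p U >]) m.
  by exists m0; apply/asboolP; exists U0.
exists (ex_minn ex); case: ex_minnP => m /asboolP Hm Hmin; split => // m' U HU.
by apply: Hmin; apply/asboolP; exists U.
Qed.

Lemma cover_at m (U : 'I_m -> set V) : closed_cover p U -> forall x, exists j, U j x.
Proof.
move=> [_ [Ucov _]] x; have : [set: V] x by [].
by rewrite -Ucov => -[j _ Ujx]; exists j.
Qed.

Lemma comp_of_cover m (U : 'I_m -> set V) i f : min_cover_size p m -> closed_cover p U ->
  affine_fun f -> (forall x, U i x -> p x = f x) -> linear_component p f.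
Proof.
move=> Hm HU Hf Hpf; split => //; exists m, U, (finset.set1 i); split => //; split => //.
split; first by apply/set0Pn; exists i; rewrite inE.
by move=> x [j] /=; rewrite inE => /eqP -> /Hpf ->.
Qed.

Lemma min_cover_hasint m (U : 'I_m -> set V) : min_cover_size p m -> closed_cover p U ->
  forall i, hasint (U i).
Proof.
move=> [_ Hmin] HU i; have [Uc [Ucov Uaff]] := HU.
apply: contrapT => nint.
have Hx : forall x, exists j, j != i /\ U j x.
  move=> x; apply: contrapT => nx.
  have : \forall y \near x, forall j, (fun j y => j != i -> ~ U j y) j y.
    apply: (@filter_forall V _ (fun j y => j != i -> ~ U j y) (nbhs x) _) => j /=.
    case: (eqVneq j i) => [->|ji].
      by apply: nearW => y.
    have nUx : ~ U j x by move=> Ujx; apply: nx; exists j.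
    have : nbhs x (~` U j) by apply: open_nbhs_nbhs; split => //; apply: closed_openC.
    by apply: filterS => y nUy _.
  move=> H; apply: nint; exists ([set y | forall j, j != i -> ~ U j y]°); split.
  - exact: open_interior.
  - by exists x.
  move=> y /interior_subset /= By; have [j Ujy] := cover_at HU y.
  case: (eqVneq j i) => [<- //|ji]; by have := By j ji.
move: i U HU Uc Ucov Uaff nint Hx Hmin; case: m => [[] //|m] i U HU Uc Ucov Uaff nint Hx Hmin.
have : closed_cover p (fun j => U (lift i j)).
  split => //; split => //; apply/seteqP; split => // x _.
  have [j [ji Ujx]] := Hx x; case: (unliftP i j) => [j' Ej|Ej]; last by rewrite Ej eqxx in ji.
  by exists j' => //; rewrite -Ej.
by move/Hmin; rewrite ltnn.
Qed.

Lemma lower_bound k (g : 'I_k -> V -> R) : injective g ->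
  (forall f, linear_component p f <-> exists i, f = g i) ->
  forall m (W : 'I_m -> set V), closed_cover p W -> (k <= m)%N.
Proof.
move=> ginj Hg m W HW; have [Wc [Wcov Waff]] := HW.
have [h Hh] := choice Waff.
have : forall r, exists l, g r = h l.
  move=> r; have [Haff [m' [U [S [Hmin [HU [Sn HS]]]]]]] := (Hg (g r)).2 (ex_intro _ r erefl).
  have [i iS] := set0Pn _ Sn.
  have [Ob [Oo On OU]] := min_cover_hasint Hmin HU i.
  have [ | l [Pb [Po Pn PO PW]]] := baire_fin (s := enum 'I_m) Wc Oo On.
    by move=> x _; have [l Wlx] := cover_at HW x; exists l; rewrite ?mem_enum.
  exists l; have [a [b Hab]] := Haff; have [a' [b' Hab']] := (Hh l).1.
  have [] := affine_eq_open (a := a) (a' := a') (b := b) (b' := b') Po Pn.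
    move=> x Px; rewrite -/(dot a x) -/(dot a' x) in Hab Hab'.
    rewrite -Hab -Hab' -(Hh l).2; last exact: PW.
    by apply: HS; exists i => //; apply: OU; apply: PO.
  move=> E1 E2; apply: funext => x; by rewrite Hab Hab' E1 E2.
move=> /choice [phi Hphi].
have phi_inj : injective phi by move=> r1 r2 E; apply: ginj; rewrite !Hphi E.
by have := leq_card phi phi_inj; rewrite !card_ord.
Qed.

End Cov.

Section Aux.
Variable R : realType.

Lemma poly_nonroot (q : {poly R}) : q != 0 -> exists s, q.[s] != 0.
Proof.
move=> q0; apply: contrapT => H.
have allr : all (root q) [seq i%:R | i <- iota 0 (size q)].
  apply/allP => s _; apply/rootP; apply: contrapT => /eqP qs; apply: H; by exists s.
have un : uniq [seq (i%:R : R) | i <- iota 0 (size q)].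
  by rewrite map_inj_uniq ?iota_uniq // => i j /eqP; rewrite eqr_nat => /eqP.
by have := max_poly_roots q0 allr un; rewrite size_map size_iota ltnn.
Qed.

Lemma generic_dir n (I : finType) (w : I -> 'rV[R]_n) :
  exists v, forall e, w e != 0 -> dot (w e) v != 0.
Proof.
pose q e := \sum_(i < n) ((w e) 0 i)%:P * 'X^i.
have qE : forall e s, (q e).[s] = dot (w e) (\row_(i < n) s ^+ i).
  move=> e s; rewrite horner_sum /dot; apply: eq_bigr => i _.
  by rewrite mxE hornerCM hornerXn.
have q0 : forall e, w e != 0 -> q e != 0.
  move=> e; apply: contra => /eqP qe; apply/eqP/rowP => i; rewrite [RHS]mxE.
  have : (q e)`_i = 0 by rewrite qe coef0.
  rewrite /q coef_sum (bigD1 i) //= big1 => [|j ji]; last first.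
    by rewrite coefCM coefXn (inj_eq val_inj) eq_sym (negPf ji) ?mulr0n mulr0.
  by rewrite coefCM coefXn eqxx mulr1 addr0.
have [s Hs] : exists s, (\prod_(e | w e != 0) q e).[s] != 0.
  by apply: poly_nonroot; apply/prodf_neq0 => e /q0.
exists (\row_(i < n) s ^+ i) => e we; rewrite -qE.
by move: Hs; rewrite horner_prod => /prodf_neq0 /(_ e we).
Qed.

Lemma near_lin (c0 c1 : R) : (c0 != 0) || (c1 != 0) ->
  \forall t \near 0^'+, (c0 + c1 * t != 0) && ((0 < c0) ==> (0 < c0 + c1 * t)).
Proof.
case: (eqVneq c0 0) => [->|c00] /= H.
  near=> t.
  have t0 : 0 < t by near: t; apply: nbhs_right_gt.
  by rewrite add0r ltxx /= andbT mulf_neq0 // gt_eqF.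
have b0 : 0 < `|c0| / (`|c1| + 1).
  by apply: divr_gt0; rewrite ?normr_gt0 //; apply: ltr_pwDr => //.
near=> t.
have t0 : 0 < t by near: t; apply: nbhs_right_gt.
have tb : t < `|c0| / (`|c1| + 1) by near: t; apply: nbhs_right_lt.
have Hb : `|c1 * t| < `|c0|.
  rewrite normrM (gtr0_norm t0).
  apply: (le_lt_trans (y := `|c1| * (`|c0| / (`|c1| + 1)))).
    by apply: ler_wpM2l => //; apply: ltW.
  rewrite mulrA ltr_pdivrMr; last by apply: ltr_pwDr.
  have : 0 < `|c0| by rewrite normr_gt0.
  nra.
move: Hb; rewrite ltr_norml => /andP [H1 H2].
case: (ltrgtP c0 0) => [c0n|c0p|c0z]; last by rewrite c0z eqxx in c00.
  rewrite ltr0_norm // in H1 H2; apply/andP; split; last by apply/implyP => c0p; lra.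
  by rewrite lt_eqF //; lra.
rewrite gtr0_norm // in H1 H2; apply/andP; split; first by rewrite gt_eqF //; lra.
by apply/implyP => _; lra.
Unshelve. all: by end_near.
Qed.

End Aux.

Section Cells.
Variables (R : realType) (n k : nat).
Local Notation V := 'rV[R]_n.
Variable p : V -> R.
Variable g : 'I_k -> V -> R.
Hypothesis ginj : injective g.
Variables (a : 'I_k -> V) (b : 'I_k -> R).
Hypothesis Hab : forall r x, g r x = dot (a r) x + b r.
Variables (m : nat) (U : 'I_m -> set V) (c : 'I_m -> 'I_k).
Hypothesis HU : closed_cover p U.
Hypothesis Hc : forall i x, U i x -> p x = g (c i) x.

Lemma gaff r : affine_fun (g r).
Proof. by exists (a r), (b r); apply: Hab. Qed.

Lemma p_at x : exists r, p x = g r x.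
Proof. by have [j Uj] := cover_at HU x; exists (c j); apply: Hc. Qed.

Definition generic (y : V) := forall i j, i != j -> g i y != g j y.
Definition pat (y : V) : {ffun 'I_k * 'I_k -> bool} := [ffun e => g e.1 y < g e.2 y].
Definition Pset : {set {ffun 'I_k * 'I_k -> bool}} :=
  [set s | `[< exists y, generic y /\ pat y = s >]].
Definition Cell (s : {ffun 'I_k * 'I_k -> bool}) : set V :=
  [set x | forall i j, s (i, j) -> g i x <= g j x].

Lemma PsetP s : reflect (exists y, generic y /\ pat y = s) (s \in Pset).
Proof. by rewrite inE; apply: (iffP (asboolP _)). Qed.

Lemma cell_closed s : closed (Cell s).
Proof.
have -> : Cell s = \bigcap_(e in [set: 'I_k * 'I_k])
    [set x | s e -> g e.1 x <= g e.2 x].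
  apply/seteqP; split => x /= H.
    by move=> [i j] _ /=; apply: H.
  by move=> i j; apply: (H (i, j)).
apply: closed_bigI => e _; case: (s e).
  have -> : [set x | true -> g e.1 x <= g e.2 x] =
      (fun x => g e.2 x - g e.1 x) @^-1` [set r : R | 0 <= r].
    by apply/seteqP; split => x /=; rewrite subr_ge0 //; apply.
  apply: preimage_closed; last exact: closed_ge.
  have haff : affine_fun (fun x => g e.2 x - g e.1 x).
    exists (a e.2 - a e.1), (b e.2 - b e.1) => x.
    rewrite -/(dot _ x) !Hab dotBl; ring.
  by move=> x _; apply: (affine_continuous haff).
have -> : [set x | false -> g e.1 x <= g e.2 x] = setT.
  by apply/seteqP; split => x.
exact: closedT.
Qed.

Lemma cell_convex s : convex_set_R (Cell s).
Proof.
move=> x y t Cx Cy t0 t1 i j sij; rewrite !affine_conv; try exact: gaff.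
have := Cx i j sij; have := Cy i j sij; nra.
Qed.


Lemma cell_p s : s \in Pset -> exists r, forall x, Cell s x -> p x = g r x.
Proof.
move=> /PsetP [y0 [gy0 Py0]].
have [r Hr] := p_at y0.
exists r => x Cx.
pose sg t : V := t *: x + (1 - t) *: y0.
have gen : forall t, 0 <= t -> t < 1 -> generic (sg t).
  move=> t t0 t1.
  suff H : forall i j, g i y0 < g j y0 -> g i (sg t) < g j (sg t).
    move=> i j ij; case: (ltrgtP (g i y0) (g j y0)) => [h|h|h].
    - by rewrite lt_eqF // H.
    - by rewrite gt_eqF // H.
    - by have := gy0 i j ij; rewrite h eqxx.
  move=> i j lt; have sij : s (i, j) by rewrite -Py0 ffunE.
  have := Cx i j sij; rewrite /sg !affine_conv; try exact: gaff.
  nra.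
have sgc : continuous sg.
  move=> t; apply: cvgD.
    by apply: cvgZr_tmp; exact: cvg_id.
  apply: cvgZr_tmp; apply: cvgB; [exact: cvg_cst|exact: cvg_id].
pose A := `[(0:R), 1[%classic.
have AP : forall t, A t -> 0 <= t /\ t < 1.
  by move=> t; rewrite /A /= in_itv /= => /andP [].
pose C1 := \bigcup_(i in [set i | c i = r]) (sg @^-1` U i).
pose C2 := ~` \bigcup_(i in [set i | c i != r]) (sg @^-1` U i).
have [Uc _] := HU.
have C1c : closed C1.
  apply: closed_bigcup; first exact: finite_finset.
  by move=> i _; apply: preimage_closed => // t _; apply: sgc.
have C2o : open C2.
  apply: closed_openC; apply: closed_bigcup; first exact: finite_finset.
  by move=> i _; apply: preimage_closed => // t _; apply: sgc.
pose B := [set t | A t /\ p (sg t) = g r (sg t)].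
have BC1 : B = A `&` C1.
  apply/seteqP; split => t [At].
    move=> E; split => //; have [t0 t1] := AP t At.
    have [j Uj] := cover_at HU (sg t); exists j => //=.
    apply/eqP; apply: contraT => cj.
    by have := gen t t0 t1 _ _ cj; rewrite -(Hc Uj) E eqxx.
  by move=> [j /= cj Uj]; split => //; rewrite (Hc Uj) cj.
have BC2 : B = A `&` C2.
  apply/seteqP; split => t [At].
    move=> E; split => //; have [t0 t1] := AP t At.
    move=> [j /= cj Uj].
    by have := gen t t0 t1 _ _ cj; rewrite -(Hc Uj) E eqxx.
  move=> nC; split => //; have [j Uj] := cover_at HU (sg t).
  rewrite (Hc Uj); case: (eqVneq (c j) r) => [-> //|cj].
  by exfalso; apply: nC; exists j.
have BA : B = A.
  have conA : connected A by apply/connected_intervalP; apply: interval_is_interval.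
  apply: conA.
  - exists 0; split; first by rewrite /A /= in_itv /= lexx ltr01.
    by rewrite /sg scale0r add0r subr0 scale1r.
  - by exists C2.
  - by exists C1.
have C1_1 : C1 1.
  apply: contrapT => nC1.
  have : nbhs (1 : R) (~` C1) by apply: open_nbhs_nbhs; split => //; apply: closed_openC.
  move=> /nbhs_ballP [e /= e0 He].
  have [t [t0 t1 te]] : exists t : R, [/\ 0 <= t, t < 1 & 1 - t < e].
    case: (ltrP (1 - e / 2) 0) => h.
      by exists 0; split => //; lra.
    by exists (1 - e / 2); split => //; lra.
  have At : A t by rewrite /A /= in_itv /= t0 t1.
  have : B t by rewrite BA.
  rewrite BC1 => -[_ C1t]; apply: (He t) => //.
  by rewrite -ball_normE /= ger0_norm; lra.
move: C1_1 => [j /= cj Uj].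
have -> : x = sg 1 by rewrite /sg scale1r subrr scale0r addr0.
by rewrite (Hc Uj) cj.
Qed.


Lemma generic_lt y i j : generic y -> i != j -> (g i y < g j y) = ~~ (g j y < g i y).
Proof.
move=> gy ij; case: (ltrgtP (g i y) (g j y)) => h //.
by have := gy i j ij; rewrite h eqxx.
Qed.

Lemma cells_cover x : exists2 s, s \in Pset & Cell s x.
Proof.
have [v Hv] := generic_dir (fun e : 'I_k * 'I_k => a e.2 - a e.1).
have Hline : forall r t, g r (x + t *: v) = g r x + t * dot (a r) v.
  by move=> r t; apply: affine_line (Hab r) x v t.
pose P e t := e.1 != e.2 -> (g e.2 x - g e.1 x + dot (a e.2 - a e.1) v * t != 0) &&
   ((0 < g e.2 x - g e.1 x) ==> (0 < g e.2 x - g e.1 x + dot (a e.2 - a e.1) v * t)).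
have near_all : \forall t \near 0^'+, forall e, P e t.
  apply: (@filter_forall R _ P (0^'+) _) => e.
  case: (eqVneq e.1 e.2) => [E | ne]; first by apply: nearW => t; rewrite /P E eqxx.
  have nz : (g e.2 x - g e.1 x != 0) || (dot (a e.2 - a e.1) v != 0).
    case: (eqVneq (a e.1) (a e.2)) => ae; last first.
      by apply/orP; right; apply: Hv; rewrite subr_eq0 eq_sym.
    apply/orP; left; apply: contra ne => /eqP H; apply/eqP; apply: ginj.
    apply: funext => z; rewrite !Hab ae.
    have : b e.2 = b e.1 by move: H; rewrite !Hab ae; lra.
    by move=> ->.
  by apply: filterS (near_lin nz) => t H _.
have [t Ht] := filter_ex near_all.
pose y := x + t *: v.
have Ly : forall i j, g j y - g i y = (g j x - g i x) + dot (a j - a i) v * t.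
  by move=> i j; rewrite /y !Hline dotBl; ring.
exists (pat y).
  apply/PsetP; exists y; split => // i j ij.
  have := Ht (i, j) ij; rewrite /= -Ly => /andP [H _].
  by rewrite eq_sym -subr_eq0.
move=> i j; rewrite ffunE /= => lt; rewrite leNgt; apply/negP => gt.
have ji : j != i by apply: contraTneq gt => ->; rewrite ltxx.
have := Ht (j, i) ji; rewrite /= -Ly => /andP [_ /implyP H].
have := H; rewrite subr_gt0 => /(_ gt); rewrite subr_gt0 => lt2.
by have := lt_trans lt lt2; rewrite ltxx.
Qed.

Lemma Pset_fact : (#|Pset| <= k`!)%N.
Proof.
pose Phi (q : {perm 'I_k}) : {ffun 'I_k * 'I_k -> bool} := [ffun e => (q e.1 < q e.2)%N].
have sub : Pset \subset Phi @: [set: {perm 'I_k}]%SET.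
  apply/fintype.subsetP => s /PsetP [y [gy <-]].
  pose rk (i : 'I_k) := #|[set j | g j y < g i y]%SET|.
  have rk_lt : forall i, (rk i < k)%N.
    move=> i; rewrite -[k]card_ord -cardsT; apply: proper_card; rewrite properT.
    apply/eqP => /setP /(_ i); by rewrite !inE ltxx.
  have rk_mono : forall i j, g i y < g j y -> (rk i < rk j)%N.
    move=> i j lt; apply: proper_card; apply/properP; split.
      by apply/fintype.subsetP => l; rewrite !inE => /lt_trans; apply.
    by exists i; rewrite !inE ?lt ?ltxx.
  have rkE : forall i j, (g i y < g j y) = (rk i < rk j)%N.
    move=> i j; case: (ltrgtP (g i y) (g j y)) => h.
    - by rewrite rk_mono.
    - by apply/esym/negbTE; rewrite -leqNgt ltnW // rk_mono.
    - case: (eqVneq i j) => [->|ij]; first by rewrite ltnn.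
      by have := gy i j ij; rewrite h eqxx.
  have finj : injective (fun i => Ordinal (rk_lt i)).
    move=> i j /(congr1 val) /= E; apply/eqP; apply: contraT => ij.
    case: (ltrgtP (g i y) (g j y)) => h.
    - by have := rk_mono _ _ h; rewrite E ltnn.
    - by have := rk_mono _ _ h; rewrite E ltnn.
    - by have := gy i j ij; rewrite h eqxx.
  apply/imsetP; exists (perm finj) => //.
  by apply/ffunP => e; rewrite !ffunE !permE /= rkE.
apply: (leq_trans (subset_leq_card sub)); apply: (leq_trans (leq_imset_card _ _)).
by rewrite cardsT card_Sn.
Qed.


Definition Edges : {set 'I_k * 'I_k} := [set e : 'I_k * 'I_k | (e.1 < e.2)%N]%SET.
Definition Fam : {set {set 'I_k * 'I_k}} := [set [set e in Edges | s e]%SET | s : {ffun 'I_k * 'I_k -> bool} in Pset]%SET.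

Lemma Fam_sub S : S \in Fam -> S \subset Edges.
Proof.
by move=> /imsetP [s _ ->]; apply/fintype.subsetP => e; rewrite inE => /andP [].
Qed.

Lemma Fam_card : #|Pset| = #|Fam|.
Proof.
rewrite card_in_imset // => s1 s2 /PsetP [y1 [g1 <-]] /PsetP [y2 [g2 <-]] Eq.
apply/ffunP => -[i j]; rewrite !ffunE /=.
case: (ltngtP i j) => [ij|ji|ij].
- by move/setP: (Eq) => /(_ (i, j)); rewrite !inE /= ij !ffunE.
- move/setP: (Eq) => /(_ (j, i)); rewrite !inE /= ji !ffunE /= => E.
  have ij : i != j by rewrite neq_ltn ji orbT.
  by rewrite (generic_lt g1 ij) (generic_lt g2 ij) E.
- by rewrite (val_inj ij) !ltxx.
Qed.

Lemma sum_const_K N (ev : 'I_N -> 'I_k * 'I_k) (d : 'rV[R]_N) :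
  d *m (\matrix_(r, i) (a (ev r).2 - a (ev r).1) 0 i) = 0 ->
  forall y, \sum_r d 0 r * (g (ev r).2 y - g (ev r).1 y) =
            \sum_r d 0 r * (b (ev r).2 - b (ev r).1).
Proof.
move=> dM y.
have -> : \sum_r d 0 r * (g (ev r).2 y - g (ev r).1 y) =
   \sum_r d 0 r * dot (a (ev r).2 - a (ev r).1) y + \sum_r d 0 r * (b (ev r).2 - b (ev r).1).
  by rewrite -big_split; apply: eq_bigr => r _; rewrite /= !Hab dotBl; ring.
suff -> : \sum_r d 0 r * dot (a (ev r).2 - a (ev r).1) y = 0 by rewrite add0r.
rewrite /dot.
under eq_bigr do rewrite mulr_sumr.
rewrite exchange_big /= big1 // => i _.
move/matrixP: (dM) => /(_ 0 i); rewrite !mxE => E.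
rewrite (eq_bigr (fun j => d 0 j * (a (ev j).2 0 i + - a (ev j).1 0 i))) in E; last first.
  by move=> j _; rewrite !mxE.
under eq_bigr do rewrite !mxE.
rewrite (eq_bigr (fun r => d 0 r * (a (ev r).2 0 i + - a (ev r).1 0 i) * y 0 i)); last first.
  by move=> r _; rewrite mulrA.
by rewrite -mulr_suml E mul0r.
Qed.


Lemma Fam_shatter (A : {set 'I_k * 'I_k}) : shatters Fam A -> (#|A| <= n)%N.
Proof.
move=> sh; rewrite leqNgt; apply/negP => An.
have AE : A \subset Edges.
  move/shattersP: (sh) => /(_ A (subxx A)) [S SF SA].
  by apply: (fintype.subset_trans _ (Fam_sub SF)); rewrite -SA finset.subsetIl.
pose ev (r : 'I_#|A|) : 'I_k * 'I_k := enum_val r.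
have evA : forall r, ev r \in A by move=> r; apply: enum_valP.
have evinj : injective ev by apply: enum_val_inj.
have evlt : forall r, ((ev r).1 < (ev r).2)%N.
  by move=> r; have := fintype.subsetP AE _ (evA r); rewrite inE.
pose M : 'M[R]_(#|A|, n) := \matrix_(r, i) (a (ev r).2 - a (ev r).1) 0 i.
have Kneg : forall d : 'rV[R]_#|A|, d *m M = 0 -> d != 0 ->
    0 <= \sum_r d 0 r * (b (ev r).2 - b (ev r).1) -> False.
  move=> d dM dn K0.
  pose B := [set ev r | r in [set r | d 0 r < 0]%SET]%SET.
  have BA : B \subset A by apply/fintype.subsetP => e /imsetP [r _ ->]; exact: evA.
  move/shattersP: sh => /(_ B BA) [S /imsetP [s /PsetP [y [gy Py]] ->] SA].
  have key : forall r, (d 0 r < 0) = (g (ev r).1 y < g (ev r).2 y).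
    move=> r; have <- : (ev r \in B) = (d 0 r < 0) by rewrite (mem_imset _ _ evinj) inE.
    by rewrite -SA !inE evlt (evA r) andbT -Py ffunE.
  have gne : forall r, g (ev r).1 y != g (ev r).2 y.
    by move=> r; apply: gy; rewrite neq_ltn evlt.
  have Tle : forall r, d 0 r * (g (ev r).2 y - g (ev r).1 y) <= 0 /\
      (d 0 r != 0 -> d 0 r * (g (ev r).2 y - g (ev r).1 y) < 0).
    move=> r; have := key r; have := gne r.
    case: (ltrP (d 0 r) 0) => h.
      move=> _ /esym H; have H' : g (ev r).1 y < g (ev r).2 y by rewrite H.
      split; first by nra.
      by move=> _; nra.
    move=> ne /esym /negbT; rewrite -leNgt => le.
    have lt : g (ev r).2 y < g (ev r).1 y by rewrite lt_neqAle le eq_sym ne.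
    split; first by nra.
    move=> dn0; have : 0 < d 0 r by rewrite lt_neqAle eq_sym dn0 h.
    by nra.
  have [r1 r1n] : exists r1, d 0 r1 != 0.
    apply: contrapT => H; move/eqP: dn; apply; apply/rowP => r; rewrite mxE.
    by apply/eqP; apply: contrapT => /negP H2; apply: H; exists r.
  have Ksum := sum_const_K dM y.
  have : \sum_r d 0 r * (g (ev r).2 y - g (ev r).1 y) < 0.
    rewrite (bigD1 r1) //=; have := (Tle r1).2 r1n.
    have : \sum_(r | r != r1) d 0 r * (g (ev r).2 y - g (ev r).1 y) <= 0.
      by apply: sumr_le0 => r _; exact: (Tle r).1.
    lra.
  rewrite Ksum; lra.
have : ~~ row_free M.
  by rewrite /row_free; apply/negP => /eqP E; move: (rank_leq_col M); rewrite E leqNgt An.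
rewrite -kermx_eq0 => kn.
have [r0 r0n] : exists r0, row r0 (kermx M) != 0.
  apply: contrapT => H; move/negP: kn; apply; apply/eqP/row_matrixP => r.
  rewrite row0; apply/eqP; apply: contrapT => /negP H'; apply: H; by exists r.
pose d := row r0 (kermx M).
have dM : d *m M = 0 by rewrite /d -row_mul mulmx_ker row0.
case: (lerP 0 (\sum_r d 0 r * (b (ev r).2 - b (ev r).1))) => K.
  exact: Kneg dM r0n K.
apply: (Kneg (- d)).
- by rewrite mulNmx dM oppr0.
- by rewrite oppr_eq0.
- rewrite (eq_bigr (fun r => - (d 0 r * (b (ev r).2 - b (ev r).1)))); last first.
    by move=> r _; rewrite mxE mulNr.
  rewrite sumrN; lra.
Qed.


Lemma pair_set_inj (x y u v : 'I_k) : (x < y)%N -> (u < v)%N ->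
  [set x; y]%SET = [set u; v]%SET -> x = u /\ y = v.
Proof.
move=> xy uv E.
move/setP: (E) => /(_ x); rewrite !inE eqxx /= => /esym hx.
move/setP: (E) => /(_ y); rewrite !inE eqxx orbT /= => /esym hy.
move/setP: (E) => /(_ u); rewrite !inE eqxx /= => hu.
move: hx hy hu => /orP [/eqP ?|/eqP ?] /orP [/eqP ?|/eqP ?] /orP [/eqP ?|/eqP ?]; subst.
all: by split => //; exfalso; lia.
Qed.

Lemma Edges_card : (#|Edges| <= (k ^ 2 - k) %/ 2)%N.
Proof.
pose f (e : 'I_k * 'I_k) : {set 'I_k} := [set e.1; e.2]%SET.
have inj : {in Edges &, injective f}.
  move=> [i j] [i' j']; rewrite !inE /= => lt lt' E.
  by have [-> ->] := pair_set_inj lt lt' E.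
rewrite -(card_in_imset inj).
have sub : f @: Edges \subset [set B : {set 'I_k} | #|B| == 2]%SET.
  apply/fintype.subsetP => B /imsetP [[i j]]; rewrite !inE /= => lt ->.
  by rewrite cards2 neq_ltn lt.
apply: (leq_trans (subset_leq_card sub)); rewrite card_draws card_ord bin2.
by rewrite -divn2 -subn1 mulnBr muln1 mulnn.
Qed.

Lemma Pset_sauer : (#|Pset| <= \sum_(i < n.+1) 'C((k ^ 2 - k) %/ 2, i))%N.
Proof.
rewrite Fam_card; apply: (leq_trans (sauer Fam_sub Fam_shatter)).
by apply: leq_sum => i _; apply: leq_bin2l; apply: Edges_card.
Qed.

End Cells.

Unset Implicit Arguments.

Theorem lemma1 (R : realType) (n k : nat) (p : 'rV[R]_n -> R) :
  in_P k p ->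
  exists m0 : nat,
    (exists U : 'I_m0 -> set 'rV[R]_n, convex_cover p U) /\
    (forall m (U : 'I_m -> set 'rV[R]_n), convex_cover p U -> (m0 <= m)%N) /\
    (k <= m0)%N /\ (m0 <= phi n k)%N.
Proof.
move=> [cpwl [g [ginj Hg]]].
have [m Hmin] := min_cover_exists cpwl.
have [U HU] := Hmin.1.
have Hab0 : forall r, exists ab : 'rV[R]_n * R, forall x, g r x = dot ab.1 x + ab.2.
  move=> r; have [Haff _] := (Hg (g r)).2 (ex_intro _ r erefl).
  by have [a [b H]] := Haff; exists (a, b).
have [ab Hab] := choice Hab0.
have Hc0 : forall i, exists r, forall x, U i x -> p x = g r x.
  move=> i; have [Uc [_ Uaff]] := HU; have [f [faff Hf]] := Uaff i.
  have [r Er] := (Hg f).1 (comp_of_cover Hmin HU faff Hf).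
  by exists r; rewrite -Er.
have [c Hc] := choice Hc0.
pose N := #|Pset g|.
pose W (j : 'I_N) := Cell g (enum_val j).
have WC : convex_cover p W.
  split; last by move=> j; apply: (cell_convex Hab).
  split; first by move=> j; apply: (cell_closed Hab).
  split.
    apply/seteqP; split => // x _.
    have [s sP Cx] := cells_cover ginj Hab x.
    by exists (enum_rank_in sP s) => //; rewrite /W enum_rankK_in.
  move=> j; have [r Hr] := cell_p Hab HU Hc (enum_valP j).
  by exists (g r); split; [exact: gaff Hab r|exact: Hr].
have ex : exists m', (fun m' => `[< exists V : 'I_m' -> set 'rV[R]_n, convex_cover p V >]) m'.
  by exists N; apply/asboolP; exists W.
exists (ex_minn ex); case: ex_minnP => m0 /asboolP [V HV] Hm0.
split; first by exists V.
split.
  by move=> m' V' HV'; apply: Hm0; apply/asboolP; exists V'.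
split; first exact: (lower_bound ginj Hg HV.1).
have m0N : (m0 <= N)%N by apply: Hm0; apply/asboolP; exists W.
rewrite /phi leq_min; apply/andP; split; apply: (leq_trans m0N).
  exact: (Pset_sauer Hab).
exact: Pset_fact.
Qed.
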